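(* For every $\epsilon,\alpha,D,L,A>0$ there exist $\eta,\beta>0$ such that if $X$ and $Y$ are connected graphs with degree bounded by $D$, $X$ has no $\alpha$-small $\epsilon$-Følner set and $f\colon X\to Y$ is an $(L,A)$-quasi-isometry, then $Y$ has no $\beta$-small $\eta$-Følner set.
   Context: Graphs are finite, with no multiple edges nor loops, viewed as metric spaces with the path-length metric. For $S\subseteq X$, $\partial S$ is the set of edges joining $S$ to $X\smallsetminus S$. A non-empty $S\subset X$ is an $\epsilon$-Følner set if $|S|\leq\frac12|X|$ and $|\partial S|\leq\epsilon|S|$; it is $\alpha$-small if $|S|<\alpha|X|$. An $(L,A)$-quasi-isometry is a map $f$ with $\frac1L d_X(x,x')-A\leq d_Y(f(x),f(x'))\leq L d_X(x,x')+A$ and every point of $Y$ within distance $A$ of $f(X)$. *)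

(* Defs.v *)
From mathcomp Require Import all_boot all_order all_algebra.
From mathcomp Require Import reals.
Set Implicit Arguments. Unset Strict Implicit. Unset Printing Implicit Defensive.
Import Order.TTheory GRing.Theory Num.Theory.
Local Open Scope ring_scope.

Definition simple_graph (T : finType) (e : rel T) : Prop :=
  symmetric e /\ irreflexive e.

Definition connected_graph (T : finType) (e : rel T) : Prop :=
  forall x y : T, connect e x y.

Definition deg_bounded (R : realType) (T : finType) (e : rel T) (D : R) : Prop :=
  forall x : T, (#|[set y | e x y]|%:R <= D).

(* path-length metric: least n such that there is a walk with n edges from x
   to y (searched among n <= #|T|, which suffices in a connected graph). *)
Definition gdist (T : finType) (e : rel T) (x y : T) : nat :=
  find (fun n => [exists p : n.-tuple T, path e x p && (last x p == y)])
       (iota 0 #|T|.+1).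

Definition edge_boundary (T : finType) (e : rel T) (S : {set T}) : {set T * T} :=
  [set p : T * T | e p.1 p.2 && (p.1 \in S) && (p.2 \notin S)].

Definition folner (R : realType) (T : finType) (e : rel T) (eps : R) (S : {set T}) : Prop :=
  S != set0 /\ (#|S|%:R <= #|T|%:R / 2 :> R) /\
  (#|edge_boundary e S|%:R <= eps * #|S|%:R).

Definition small (R : realType) (T : finType) (alpha : R) (S : {set T}) : Prop :=
  #|S|%:R < alpha * #|T|%:R.

Definition quasi_isometry (R : realType) (X Y : finType) (eX : rel X) (eY : rel Y)
  (L A : R) (f : X -> Y) : Prop :=
  (forall x x' : X,
      (gdist eX x x')%:R / L - A <= (gdist eY (f x) (f x'))%:R /\
      (gdist eY (f x) (f x'))%:R <= L * (gdist eX x x')%:R + A) /\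
  (forall y : Y, exists x : X, (gdist eY y (f x))%:R <= A).

(* Main.v *)
Require Import Defs.
From mathcomp Require Import all_boot all_order all_algebra.
From mathcomp Require Import reals zify ring lra.
Import Order.TTheory GRing.Theory Num.Theory.
Set Implicit Arguments. Unset Strict Implicit.

Section Walks.
Variables (T : finType) (e : rel T).

Inductive walk : T -> T -> nat -> Prop :=
| w0 x : walk x x 0
| wS x y z n : e x y -> walk y z n -> walk x z n.+1.

Lemma walk_path x y n :
  walk x y n <-> exists p : seq T, [/\ size p = n, path e x p & last x p = y].
Proof.
split.
  elim=> [z|a b c k eab _ [p [sp pp lp]]]; first by exists [::].
  by exists (b :: p); rewrite /= eab pp sp lp.
elim: n x => [|n IH] x [p [sp pp lp]].
  by case: p sp pp lp => //= _ _ ->; constructor.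
case: p sp pp lp => //= b p [sp] /andP[exb pp] lp.
by apply: (wS exb); apply: IH; exists p.
Qed.

Lemma walk_cat x y z n m : walk x y n -> walk y z m -> walk x z (n + m).
Proof. by elim=> // a b c k eab _ IH /IH; apply: wS. Qed.

Lemma walk_snoc x y z n : walk x y n -> e y z -> walk x z n.+1.
Proof.
move=> w eyz; rewrite -addn1; apply: (walk_cat w); apply: (wS eyz); constructor.
Qed.

Hypothesis esym : symmetric e.

Lemma walk_sym x y n : walk x y n -> walk y x n.
Proof.
elim=> [a|a b c k eab _ IH]; first by constructor.
by apply: (walk_snoc IH); rewrite esym.
Qed.

Lemma walk_cross (S : {set T}) x y n : walk x y n -> x \in S -> y \notin S ->
  exists u v k, [/\ e u v, u \in S, v \notin S, (k <= n)%N & walk x u k].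
Proof.
elim=> [a -> //|a b c k eab w IH aS cS].
case bS: (b \in S).
  have [u [v [j [euv uS vS jk wbu]]]] := IH bS cS.
  exists u, v, j.+1; split=> //; exact: (wS eab).
exists a, b, 0; split=> //; [by rewrite bS | by constructor].
Qed.

Definition Pg x y := fun n => [exists p : n.-tuple T, path e x p && (last x p == y)].

Lemma Pg_walk x y n : Pg x y n -> walk x y n.
Proof.
move/existsP=> [p /andP[pp /eqP lp]]; apply/walk_path; exists p; split=> //.
exact: size_tuple.
Qed.

Lemma walk_Pg x y n : walk x y n -> Pg x y n.
Proof.
move/walk_path=> [p [sp pp lp]]; apply/existsP.
have sp' : size p == n by apply/eqP.
exists (Tuple sp'); by rewrite /= pp lp eqxx.
Qed.

Hypothesis conn : forall x y, connect e x y.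

Lemma has_Pg x y : has (Pg x y) (iota 0 #|T|.+1).
Proof.
have /connectP [p pp ->] := conn x y.
case: (shortenP pp) => p' pp' up' _.
apply/hasP; exists (size p').
  rewrite mem_iota /= add0n ltnS.
  have := max_card (mem (x :: p')); rewrite (card_uniqP up') /=; lia.
by apply: walk_Pg; apply/walk_path; exists p'.
Qed.

Lemma gdist_walk x y : walk x y (gdist e x y).
Proof.
have h := has_Pg x y.
have := nth_find 0 h; rewrite nth_iota ?add0n; first exact: Pg_walk.
by move: h; rewrite has_find size_iota.
Qed.

Lemma gdist_le x y n : walk x y n -> (gdist e x y <= n)%N.
Proof.
move=> w; have h := has_Pg x y.
case: (leqP (gdist e x y) n) => // lt.
have : (n < #|T|.+1)%N.
  by rewrite has_find size_iota in h; exact: ltn_trans lt h.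
move=> nT.
have := before_find 0 lt; rewrite nth_iota // add0n.
by have := walk_Pg w; rewrite /Pg => ->.
Qed.

Lemma gdist_leP x y r :
  (gdist e x y <= r)%N <-> exists k, (k <= r)%N /\ walk x y k.
Proof.
split; first by move=> h; exists (gdist e x y); split=> //; exact: gdist_walk.
by move=> [k [kr w]]; apply: leq_trans (gdist_le w) kr.
Qed.

Lemma gdist_sym x y : gdist e x y = gdist e y x.
Proof.
apply/eqP; rewrite eqn_leq; apply/andP; split; apply: gdist_le; apply: walk_sym;
  exact: gdist_walk.
Qed.

Lemma gdist_tri x y z : (gdist e x z <= gdist e x y + gdist e y z)%N.
Proof. apply: gdist_le; apply: walk_cat; exact: gdist_walk. Qed.

Lemma gdist0 x y : gdist e x y = 0%N -> x = y.
Proof. move=> h; have := gdist_walk x y; rewrite h; by inversion 1. Qed.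

Lemma gdist_edge x y : e x y -> (gdist e x y <= 1)%N.
Proof. move=> exy; apply: gdist_le; apply: (wS exy); constructor. Qed.

End Walks.
Lemma card_bigcup_le (I T : finType) (P : {pred I}) (B : I -> {set T}) :
  (#|\bigcup_(i in P) B i| <= \sum_(i in P) #|B i|)%N.
Proof.
apply: (big_ind2 (fun (A : {set T}) n => #|A| <= n)%N) => //.
  by rewrite cards0.
move=> A n C m hA hC; rewrite cardsU; apply: leq_trans (leq_subr _ _) _.
exact: leq_add.
Qed.

Lemma cover_le (I T : finType) (P : {pred I}) (B : I -> {set T}) (A : {set T}) K :
  A \subset \bigcup_(i in P) B i -> (forall i, i \in P -> #|B i| <= K)%N ->
  (#|A| <= #|P| * K)%N.
Proof.
move=> sub hB; apply: leq_trans (subset_leq_card sub) _.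
apply: leq_trans (card_bigcup_le _ _) _.
rewrite -sum1_card big_distrl /=; apply: leq_sum => i iP; rewrite mul1n; exact: hB.
Qed.

Section Ball.
Variables (T : finType) (e : rel T) (Dn : nat).
Hypothesis esym : symmetric e.
Hypothesis conn : forall x y, connect e x y.
Hypothesis deg : forall x, (#|[set y | e x y]| <= Dn)%N.

Definition ball r c := [set y | (gdist e c y <= r)%N].

Lemma card_ball r c : (#|ball r c| <= (Dn.+1) ^ r)%N.
Proof.
elim: r => [|r IH].
  rewrite expn0; have -> : ball 0 c = [set c].
    apply/setP=> y; rewrite !inE leqn0; apply/idP/idP.
      by move/eqP/(gdist0 conn)=> ->.
    move/eqP=> ->; apply/eqP; have := gdist_le conn (w0 e c); lia.
  by rewrite cards1.
have sub : ball r.+1 c \subset ball r c :|: \bigcup_(z in ball r c) [set y | e z y].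
  apply/subsetP=> y; rewrite !inE => /(gdist_leP conn) [k [kr w]].
  case: (leqP k r) => kr'.
    by apply/orP; left; apply/(gdist_leP conn); exists k.
  have kE : k = r.+1 by lia.
  rewrite kE in w; have := walk_sym esym w; inversion 1; subst.
  apply/orP; right; apply/bigcupP; exists y0.
    rewrite inE; apply/(gdist_leP conn); exists r; split=> //; exact: walk_sym.
  by rewrite inE esym.
apply: leq_trans (subset_leq_card sub) _.
rewrite cardsU; apply: leq_trans (leq_subr _ _) _.
apply: leq_trans (leq_add (leqnn _) (card_bigcup_le _ _)) _.
have hs : (\sum_(z in ball r c) #|[set y | e z y]| <= \sum_(z in ball r c) Dn)%N.
  by apply: leq_sum => i _; exact: deg.
apply: leq_trans (leq_add (leqnn _) hs) _.
rewrite sum_nat_const expnS.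
have := IH; nia.
Qed.

Lemma card_ball_le r R c : (r <= R)%N -> (#|ball r c| <= (Dn.+1) ^ R)%N.
Proof. move=> rR; apply: leq_trans (card_ball r c) _; exact: leq_pexp2l. Qed.

End Ball.
Section Main.
Variables (X Y : finType) (eX : rel X) (eY : rel Y) (f : X -> Y) (Dn m r1 a : nat).
Hypotheses (symX : symmetric eX) (symY : symmetric eY).
Hypotheses (connX : forall x y, connect eX x y) (connY : forall x y, connect eY x y).
Hypotheses (degX : forall x, (#|[set y | eX x y]| <= Dn)%N)
           (degY : forall x, (#|[set y | eY x y]| <= Dn)%N).
Hypothesis Q1 : forall x x', (gdist eY (f x) (f x') <= m + m)%N -> (gdist eX x x' <= r1)%N.
Hypothesis Q2 : forall x x', eX x x' -> (gdist eY (f x) (f x') <= m)%N.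
Hypothesis Q3 : forall y, exists x, (gdist eY y (f x) <= a)%N.

Let K := (Dn.+1 ^ (maxn r1.+1 a))%N.

Variable S : {set Y}.
Let T := f @^-1: S.

Lemma bd_T : (#|edge_boundary eX T| <= #|edge_boundary eY S| * (K * K))%N.
Proof.
pose P (p : Y * Y) := [set q in edge_boundary eX T | (gdist eY (f q.1) p.1 <= m)%N].
rewrite /edge_boundary; apply: (@cover_le _ _ _ P).
  apply/subsetP=> q. rewrite in_set. move=> /andP[/andP[eq1 q1T] q2T].
  have /(gdist_leP connY) [k [km w]] := Q2 eq1.
  rewrite !inE in q1T q2T.
  have [u [v [j [euv uS vS jk wu]]]] := walk_cross w q1T q2T.
  apply/bigcupP; exists (u, v); first by rewrite inE /= euv uS vS.
  rewrite !inE eq1 q1T q2T /=.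
  apply/(gdist_leP connY); exists j; split=> //; lia.
move=> p _; case: (set_0Vmem (P p)) => [->|[q0 q0P]]; first by rewrite cards0.
have sub : P p \subset setX (ball eX r1.+1 q0.1) (ball eX r1.+1 q0.1).
  apply/subsetP=> q qP; move: qP q0P; rewrite !inE => /andP[/andP[/andP[eq _] _] h]
     /andP[_ h0].
  have hd : (gdist eX q0.1 q.1 <= r1)%N.
    apply: Q1; apply: leq_trans (gdist_tri connY _ p.1 _) _.
    rewrite (gdist_sym symY connY p.1); exact: leq_add.
  apply/andP; split; first lia.
  apply: leq_trans (gdist_tri connX _ q.1 _) _.
  have := gdist_edge connX eq; lia.
apply: leq_trans (subset_leq_card sub) _; rewrite cardsX.
apply: leq_mul; apply: card_ball_le => //; lia.
Qed.

Lemma S_le : (#|S| <= (#|T| + #|edge_boundary eY S|) * K)%N.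
Proof.
have sub : S \subset (\bigcup_(x in T) ball eY a (f x)) :|:
                     (\bigcup_(p in edge_boundary eY S) ball eY a p.1).
  apply/subsetP=> y yS; have [x hx] := Q3 y.
  case fS: (f x \in S).
    apply/setUP; left; apply/bigcupP; exists x; first by rewrite inE.
    by rewrite inE (gdist_sym symY connY).
  have /(gdist_leP connY) [k [ka w]] := hx.
  have [u [v [j [euv uS vS jk wu]]]] := walk_cross w yS (negbT fS).
  apply/setUP; right; apply/bigcupP; exists (u, v); first by rewrite inE /= euv uS vS.
  rewrite inE /=; apply/(gdist_leP connY); exists j; split; first lia.
  exact: walk_sym.
apply: leq_trans (subset_leq_card sub) _.
rewrite cardsU; apply: leq_trans (leq_subr _ _) _.
rewrite mulnDl; apply: leq_add.
  apply: (@cover_le _ _ _ (fun x => ball eY a (f x))) => // i _.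
  apply: card_ball_le => //; lia.
apply: (@cover_le _ _ _ (fun p => ball eY a p.1)) => // i _.
apply: card_ball_le => //; lia.
Qed.

Lemma T_le : (#|T| <= #|S| * K)%N.
Proof.
apply: (@cover_le _ _ _ (fun y => [set x | f x == y])).
  apply/subsetP=> x; rewrite inE => xS; apply/bigcupP; exists (f x) => //.
  by rewrite inE.
move=> y _; case: (set_0Vmem [set x | f x == y]) => [->|[x0 x0P]].
  by rewrite cards0.
have sub : [set x | f x == y] \subset ball eX r1 x0.
  apply/subsetP=> x; move: x0P; rewrite !inE => /eqP h0 /eqP h.
  apply: Q1; rewrite h0 h; have := gdist_le connY (w0 eY y); lia.
apply: leq_trans (subset_leq_card sub) _; apply: card_ball_le => //; lia.
Qed.

Lemma Y_le : (#|Y| <= #|X| * K)%N.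
Proof.
rewrite -cardsT -(cardsT X).
apply: (@cover_le _ _ _ (fun x => ball eY a (f x))).
  apply/subsetP=> y _; have [x hx] := Q3 y; apply/bigcupP; exists x => //.
  by rewrite inE (gdist_sym symY connY).
move=> x _; apply: card_ball_le => //; lia.
Qed.

End Main.
Local Open Scope ring_scope.
Lemma arith (R : realType) (k eps alpha s t bs bt x y : R) :
  1 <= k -> 0 < eps -> 0 < alpha -> 0 <= t -> 0 <= bs -> 0 <= x ->
  bt <= bs * (k * k) -> s <= (t + bs) * k -> t <= s * k -> y <= x * k ->
  1 <= s -> bs <= eps / (2 * k * k * k * (1 + eps)) * s ->
  s < alpha / (2 * (1 + alpha) * k * k) * y ->
  [/\ 0 < t, t <= x / 2, bt <= eps * t & t < alpha * x].
Proof.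
move=> k1 e0 a0 t0 bs0 x0 hbt hs ht hy s1 hbs hsy.
have k0 : 0 < k by lra.
set eta := eps / _ in hbs.
set beta := alpha / _ in hsy.
have c0 : 0 < 2 * k * k * k by rewrite !mulr_gt0.
have etac : eta * (2 * k * k * k) = eps / (1 + eps).
  rewrite /eta; field; apply/andP; split; lra.
have h1 : eps / (1 + eps) <= 1 by rewrite ler_pdivrMr; lra.
have h2 : eps / (1 + eps) <= eps by rewrite ler_pdivrMr; nra.
have eta0 : 0 <= eta by rewrite /eta; apply: divr_ge0; [lra| rewrite !mulr_ge0 //; lra].
have kk : k <= k * k * k by nra.
have i1 : eta * (2 * k) <= 1 by nra.
have i2 : eta * (2 * k * k * k) <= eps by lra.
have betak : beta * (k * k) = alpha / (2 * (1 + alpha)).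
  rewrite /beta; field; apply/andP; split; lra.
have m1 : alpha / (2 * (1 + alpha)) <= alpha by rewrite ler_pdivrMr; nra.
have m2 : alpha / (2 * (1 + alpha)) < 1 / 2.
  rewrite ltr_pdivrMr; first nra.
  rewrite mulr_gt0 //; lra.
have beta0 : 0 <= beta by rewrite /beta; apply: divr_ge0; [lra| rewrite !mulr_ge0 //; lra].
have s0 : 0 <= s by lra.
clearbody eta beta.
have kbs : k * bs <= s / 2.
  have : k * bs <= k * (eta * s) by rewrite ler_wpM2l //; lra.
  have : k * (eta * s) = (eta * (2 * k)) * s / 2 by field.
  nra.
have st : s <= 2 * k * t by nra.
have tpos : 0 < t by nra.
have bts : bt <= k * k * eta * s by nra.
have tk : t < k * beta * y by nra.
have tx : k * beta * y <= (alpha / (2 * (1 + alpha))) * x.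
  rewrite -betak; have h : beta * y <= beta * (x * k) by rewrite ler_wpM2l.
  have : k * (beta * y) <= k * (beta * (x * k)) by rewrite ler_wpM2l //; lra.
  nra.
split=> //.
  nra.
- have : k * k * eta * s <= k * k * eta * (2 * k * t).
    by rewrite ler_wpM2l // !mulr_ge0 //; lra.
  nra.
- nra.
Qed.

Lemma le_trunc (R : realType) (x : R) (n : nat) : (n%:R <= x)%R -> (n <= Num.truncn x)%N.
Proof. by move=> h; rewrite -[n in (n <= _)%N](natrK (R:=R)); apply: le_truncn. Qed.

Unset Implicit Arguments.
Theorem proposition2p6 (R : realType) (eps alpha D L A : R) :
  0 < eps -> 0 < alpha -> 0 < D -> 0 < L -> 0 < A ->
  exists eta beta : R, 0 < eta /\ 0 < beta /\
    forall (X Y : finType) (eX : rel X) (eY : rel Y) (f : X -> Y),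
      simple_graph eX -> simple_graph eY ->
      connected_graph eX -> connected_graph eY ->
      deg_bounded eX D -> deg_bounded eY D ->
      (forall S : {set X}, ~ (small alpha S /\ folner eX eps S)) ->
      quasi_isometry eX eY L A f ->
      forall S : {set Y}, ~ (small beta S /\ folner eY eta S).
Proof.
move=> e0 a0 D0 L0 A0.
pose Dn := Num.truncn D.
pose m := Num.truncn (L + A).
pose r1 := Num.truncn (L * ((m + m)%N%:R + A)).
pose a := Num.truncn A.
pose K := (Dn.+1 ^ maxn r1.+1 a)%N.
pose k : R := K%:R.
have k1 : 1 <= k by rewrite /k ler1n expn_gt0.
have k0 : 0 < k by lra.
exists (eps / (2 * k * k * k * (1 + eps))), (alpha / (2 * (1 + alpha) * k * k)).
split; first by apply: divr_gt0 => //; rewrite !mulr_gt0 //; lra.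
split; first by apply: divr_gt0 => //; rewrite !mulr_gt0 //; lra.
move=> X Y eX eY f [symX _] [symY _] cX cY dX dY noF [qi1 qi3] S [sm [Sne [Shalf Sbd]]].
have degX : forall x, (#|[set y | eX x y]| <= Dn)%N by move=> x; apply: le_trunc.
have degY : forall x, (#|[set y | eY x y]| <= Dn)%N by move=> x; apply: le_trunc.
have Q1 : forall x x', (gdist eY (f x) (f x') <= m + m)%N -> (gdist eX x x' <= r1)%N.
  move=> x x' h; apply: le_trunc.
  have [h1 _] := qi1 x x'.
  have h2 : (gdist eY (f x) (f x'))%:R <= (m + m)%N%:R :> R by rewrite ler_nat.
  rewrite mulrC -ler_pdivrMr //; lra.
have Q2 : forall x x', eX x x' -> (gdist eY (f x) (f x') <= m)%N.
  move=> x x' exx; apply: le_trunc.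
  have [_ h1] := qi1 x x'.
  have h2 : (gdist eX x x')%:R <= 1%:R :> R by rewrite ler_nat; exact: gdist_edge.
  nra.
have Q3 : forall y, exists x, (gdist eY y (f x) <= a)%N.
  by move=> y; have [x hx] := qi3 y; exists x; apply: le_trunc.
pose T := f @^-1: S.
have hbt : (#|edge_boundary eX T| <= #|edge_boundary eY S| * (K * K))%N.
  by apply: (@bd_T _ _ _ _ _ Dn m r1 a); try assumption.
have hs : (#|S| <= (#|T| + #|edge_boundary eY S|) * K)%N.
  by apply: (@S_le _ _ _ _ Dn r1 a); try assumption.
have ht : (#|T| <= #|S| * K)%N.
  by apply: (@T_le _ _ _ _ _ Dn m r1 a); try assumption.
have hy : (#|Y| <= #|X| * K)%N.
  by apply: (@Y_le _ _ _ _ Dn r1 a); try assumption.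
apply: (noF T).
have s1 : 1 <= #|S|%:R :> R.
  by rewrite ler1n card_gt0.
have hbt' : #|edge_boundary eX T|%:R <= #|edge_boundary eY S|%:R * (k * k) :> R.
  by rewrite /k -!natrM ler_nat.
have hs' : #|S|%:R <= (#|T|%:R + #|edge_boundary eY S|%:R) * k :> R.
  by rewrite /k -!natrD -!natrM ler_nat.
have ht' : #|T|%:R <= #|S|%:R * k :> R by rewrite /k -!natrM ler_nat.
have hy' : #|Y|%:R <= #|X|%:R * k :> R by rewrite /k -!natrM ler_nat.
have [tpos thalf tbd tsmall] := arith k1 e0 a0 (ler0n _ #|T|)
  (ler0n _ #|edge_boundary eY S|) (ler0n _ #|X|) hbt' hs' ht' hy' s1 Sbd sm.
split; first exact: tsmall.
split; last by split.
by apply/set0Pn; move: tpos; rewrite ltr0n card_gt0 => /set0Pn.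
Qed.
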